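(* Let $n\ge2$, $\rho>0$ and $\varpi\in S^{n-1}$. Let ${}^tP(\tau,\xi) = -\tau^2 + \xi\cdot\xi - i\tau\,\xi\cdot\xi$ for $(\tau,\xi)\in\mathbb{C}\times\mathbb{C}^n$, $\widetilde{\zeta^o} = (i\rho^2, i\rho\varpi)$, ${}^tP_o(\zeta) = {}^tP(\zeta+\widetilde{\zeta^o})$ and $\widetilde N = (-1,0,\ldots,0)\in\mathbb{R}\times\mathbb{R}^n$. Let $\sigma(\zeta)$ be a solution of ${}^tP_o(\zeta+\sigma\widetilde N) = 0$, $\zeta = (\tau,\xi)\in\mathbb{C}\times\mathbb{C}^n$. If $\sigma$ is analytic and single-valued in a ball $B\subset\mathbb{C}\times\mathbb{C}^n$ with real center and radius $1$, then $\sup_{\zeta\in B}\operatorname{Im}\sigma(\zeta)\ge0$. *)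

(* Defs.v *)
From Stdlib Require Import Reals.
From Coquelicot Require Import Coquelicot.
From mathcomp Require Import ssreflect ssrbool eqtype ssrnat fintype bigop.

Set Implicit Arguments.
Unset Strict Implicit.
Open Scope R_scope.

(* bilinear (non-Hermitian) dot product  xi . eta = sum_j xi_j eta_j  on C^n *)
Definition cdot (n : nat) (xi eta : 'I_n -> C) : C :=
  \big[Cplus/RtoC 0]_(j < n) Cmult (xi j) (eta j).

Definition tP (n : nat) (tau : C) (xi : 'I_n -> C) : C :=
  Cplus (Cplus (Copp (Cmult tau tau)) (cdot xi xi))
        (Copp (Cmult (Cmult Ci tau) (cdot xi xi))).

Definition tPo (n : nat) (rho : R) (varpi : 'I_n -> R) (tau : C) (xi : 'I_n -> C) : C :=
  tP (Cplus tau (Cmult Ci (RtoC (rho * rho))))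
     (fun j => Cplus (xi j) (Cmult Ci (RtoC (rho * varpi j)))).

Definition in_sphere (n : nat) (varpi : 'I_n -> R) : Prop :=
  \big[Rplus/0]_(j < n) (varpi j * varpi j) = 1.

Definition cdist (n : nat) (tau : C) (xi : 'I_n -> C) (tau' : C) (xi' : 'I_n -> C) : R :=
  sqrt (Cmod (Cminus tau tau') ^ 2
        + \big[Rplus/0]_(j < n) (Cmod (Cminus (xi j) (xi' j)) ^ 2)).

Definition in_ball (n : nat) (c0 : R) (c : 'I_n -> R) (tau : C) (xi : 'I_n -> C) : Prop :=
  cdist tau xi (RtoC c0) (fun j => RtoC (c j)) < 1.

Definition C_differentiable_at (f : C -> C) (z : C) : Prop :=
  exists l : C, forall eps : R, 0 < eps -> exists delta : R, 0 < delta /\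
    forall h : C, h <> RtoC 0 -> Cmod h < delta ->
      Cmod (Cminus (Cdiv (Cminus (f (Cplus z h)) (f z)) h) l) < eps.

Definition upd (n : nat) (xi : 'I_n -> C) (j : 'I_n) (w : C) : 'I_n -> C :=
  fun k => if k == j then w else xi k.

(* Holomorphic (= analytic) on the ball B, in the sense of Osgood:
   continuous on B and complex differentiable in each variable separately. *)
Definition holomorphic_on_ball (n : nat) (c0 : R) (c : 'I_n -> R)
    (f : C -> ('I_n -> C) -> C) : Prop :=
  (forall tau xi, in_ball c0 c tau xi ->
     forall eps : R, 0 < eps -> exists delta : R, 0 < delta /\
       forall tau' xi', in_ball c0 c tau' xi' -> cdist tau xi tau' xi' < delta ->
         Cmod (Cminus (f tau' xi') (f tau xi)) < eps) /\
  (forall tau xi, in_ball c0 c tau xi ->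
     C_differentiable_at (fun t => f t xi) tau /\
     forall j : 'I_n, C_differentiable_at (fun w => f tau (upd xi j w)) (xi j)).

(* Main.v *)
Require Import Defs.
From Stdlib Require Import Reals.
From Coquelicot Require Import Coquelicot.
From mathcomp Require Import ssreflect ssrbool eqtype ssrnat fintype bigop.
From Stdlib Require Import Lra Psatz.
Open Scope R_scope.

Lemma keyT x y a b r : 0 <= r -> -r <= a ->
  -x*x + y*y + a + y*a + x*b = 0 ->
  -2*x*y + b + y*b - x*a = 0 -> y <= r + 1.
Proof.
intros Hr Ha E1 E2.
destruct (Rle_dec y (r+1)) as [h|h]; [exact h|exfalso].
assert (HW : 0 < 1 + y) by lra.
assert (Hb : b * (1+y) = x*(2*y+a)) by lra.
assert (E3 : a*((1+y)*(1+y) + x*x) = x*x*(1-y) - y*y*(1+y)).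
{ assert (E1' : (-x*x + y*y + a + y*a)*(1+y) + x*(b*(1+y)) = 0).
  { replace 0 with (0*(1+y)) by ring. rewrite <- E1. ring. }
  rewrite Hb in E1'. nra. }
assert (H4 : -r*((1+y)*(1+y) + x*x) <= x*x*(1-y) - y*y*(1+y)).
{ rewrite <- E3. apply Rmult_le_compat_r; nra. }
assert (H5 : y*y*(1+y) <= r*((1+y)*(1+y))) by nra.
nra.
Qed.

Lemma ReQ n (rho : R) (varpi : 'I_n -> R) (c : 'I_n -> R) :
  in_sphere varpi ->
  - (rho * rho) <= fst (cdot (fun j => Cplus (RtoC (c j)) (Cmult Ci (RtoC (rho * varpi j))))
                        (fun j => Cplus (RtoC (c j)) (Cmult Ci (RtoC (rho * varpi j))))).
Proof.
rewrite /in_sphere /cdot => Hs.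
have H : fst (\big[Cplus/RtoC 0]_(j < n) Cmult (Cplus (RtoC (c j)) (Cmult Ci (RtoC (rho * varpi j))))
                                              (Cplus (RtoC (c j)) (Cmult Ci (RtoC (rho * varpi j)))))
   = \big[Rplus/0]_(j < n) (c j * c j) - rho * rho * \big[Rplus/0]_(j < n) (varpi j * varpi j)
   /\ 0 <= \big[Rplus/0]_(j < n) (c j * c j).
{ apply: (@big_ind3 C R R (fun z A B => fst z = A - rho*rho*B /\ 0 <= A)).
  - simpl; split; [ring|lra].
  - move=> z1 A1 B1 z2 A2 B2 [h1 h1'] [h2 h2']; simpl; split; [rewrite h1 h2; ring|lra].
  - move=> i _; simpl; split; [ring|nra]. }
case: H => H1 H2. rewrite H1 Hs. lra.
Qed.

Theorem lemma2 (n : nat) (hn : (2 <= n)%N) (rho : R) (hrho : 0 < rho)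
  (varpi : 'I_n -> R) (hvarpi : in_sphere varpi)
  (c0 : R) (c : 'I_n -> R) (sigma : C -> ('I_n -> C) -> C)
  (hhol : holomorphic_on_ball c0 c sigma)
  (hsol : forall tau xi, in_ball c0 c tau xi ->
            (* zeta + sigma * N~ = (tau - sigma, xi) *)
            tPo rho varpi (Cminus tau (sigma tau xi)) xi = RtoC 0) :
  Rbar_le (Rbar.Finite 0)
    (Lub_Rbar (fun y => exists tau xi, in_ball c0 c tau xi /\ y = Im (sigma tau xi))).
Proof.
set E := (fun y => _).
have key : forall eps, 0 < eps -> exists y, E y /\ - eps < y.
{ move=> eps heps.
  set s := Rmax 0 (1 - eps/2).
  have hs0 : 0 <= s by apply Rmax_l.
  have hs1 : 1 - eps/2 <= s by apply Rmax_r.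
  have hs2 : s < 1 by rewrite /s; apply Rmax_lub_lt; lra.
  set tau : C := (c0, s).
  set xi : 'I_n -> C := fun j => RtoC (c j).
  have hb : in_ball c0 c tau xi.
  { rewrite /in_ball /cdist.
    have -> : \big[Rplus/0]_(j < n) (Cmod (Cminus (xi j) (RtoC (c j))) ^ 2) = 0.
    { apply: (@big_ind R (fun x => x = 0)); [done| move=> x1 x2 -> ->; ring|]; move=> j _. rewrite /xi /Cmod /Cminus /=.
      replace (c j + - c j) with 0 by ring. replace (0 + - 0) with 0 by ring.
      simpl. replace ((0 * (0 * 1) + 0 * (0 * 1))) with 0 by ring. rewrite sqrt_0; ring. }
    have -> : Cmod (Cminus tau (RtoC c0)) ^ 2 + 0 = s * s.
    { rewrite Rplus_0_r /Cmod pow2_sqrt /tau /Cminus /=; [ring|]. nra. }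
    rewrite sqrt_square //. }
  exists (Im (sigma tau xi)); split; first by exists tau, xi.
  have := hsol tau xi hb.
  rewrite /tPo /tP.
  have hQ := @ReQ n rho varpi c hvarpi.
  set Q := cdot _ _ in hQ *.
  set T := Cplus (Cminus tau (sigma tau xi)) (Cmult Ci (RtoC (rho * rho))).
  have hT : snd T = s - Im (sigma tau xi) + rho * rho.
  { rewrite /T /tau /Cminus /Im /=. ring. }
  move: hT. case: T => x y. case: Q hQ => a b. simpl => hQ hy heq.
  have e1 := f_equal fst heq. have e2 := f_equal snd heq. simpl in e1, e2.
  have := keyT x y a b (rho*rho).
  move=> K. have := K ltac:(nra) hQ ltac:(lra) ltac:(lra). lra. }
have [hub hlub] := Lub_Rbar_correct E.
move: hub hlub. case: (Lub_Rbar E) => [l| |] hub hlub /=.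
- apply Rnot_lt_le => hl.
  have [y [hy hy']] := key (-l/2) ltac:(lra).
  have := hub y hy. simpl. lra.
- done.
- have [y [hy _]] := key 1 ltac:(lra). by have := hub y hy.
Qed.
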